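(* Let $A$ be a skew brace. The irreducible components of $\mathrm{Spec}\,A$ (with the spectral topology) are the closed sets $H(P)=\{Q\in\mathrm{Spec}\,A\mid P\subseteq Q\}$, where $P$ is a minimal prime ideal of $A$.
   Context: A (left) skew brace is a triple $(A,+,\circ)$ where $(A,+)$ and $(A,\circ)$ are groups such that $a\circ(b+c)=a\circ b-a+a\circ c$ for all $a,b,c$; common identity $e$. Put $\lambda_a(b)=-a+a\circ b$ and $a*b=-a+a\circ b-b$. An ideal is a normal subgroup $I$ of both $(A,+)$ and $(A,\circ)$ with $\lambda_a(I)\subseteq I$ for all $a$. A prime ideal is a proper ideal $P$ such that for any subsets $X,Y$ of $A$, $\{x*y\mid x\in X,y\in Y\}\subseteq P$ implies $X\subseteq P$ or $Y\subseteq P$; $\mathrm{Spec}\,A$ is the set of prime ideals, with the spectral topology whose closed sets are $H(I)=\{P\in\mathrm{Spec}\,A\mid I\subseteq P\}$, $I$ an ideal. A minimal prime ideal is a prime ideal containing no strictly smaller prime ideal. A closed set is irreducible if it is not the union of two strictly smaller closed subsets; an irreducible component is a maximal irreducible subset. *)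

(* Defs.v *)
Set Implicit Arguments.

Record SkewBrace := {
  sb_car :> Type;
  sb_add : sb_car -> sb_car -> sb_car;
  sb_opp : sb_car -> sb_car;
  sb_circ : sb_car -> sb_car -> sb_car;
  sb_cinv : sb_car -> sb_car;
  sb_e : sb_car;
  sb_addA : forall a b c, sb_add a (sb_add b c) = sb_add (sb_add a b) c;
  sb_add0l : forall a, sb_add sb_e a = a;
  sb_add0r : forall a, sb_add a sb_e = a;
  sb_addNl : forall a, sb_add (sb_opp a) a = sb_e;
  sb_addNr : forall a, sb_add a (sb_opp a) = sb_e;
  sb_circA : forall a b c, sb_circ a (sb_circ b c) = sb_circ (sb_circ a b) c;
  sb_circ1l : forall a, sb_circ sb_e a = a;
  sb_circ1r : forall a, sb_circ a sb_e = a;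
  sb_circVl : forall a, sb_circ (sb_cinv a) a = sb_e;
  sb_circVr : forall a, sb_circ a (sb_cinv a) = sb_e;
  sb_brace : forall a b c,
    sb_circ a (sb_add b c) = sb_add (sb_add (sb_circ a b) (sb_opp a)) (sb_circ a c)
}.

Arguments sb_add {s}. Arguments sb_opp {s}. Arguments sb_circ {s}. Arguments sb_cinv {s}.

Section SB.
Variable A : SkewBrace.

Definition sb_lambda (a b : A) : A := sb_add (sb_opp a) (sb_circ a b).
Definition sb_star (a b : A) : A :=
  sb_add (sb_add (sb_opp a) (sb_circ a b)) (sb_opp b).

Definition subset (X Y : A -> Prop) : Prop := forall x, X x -> Y x.

Definition is_ideal (I : A -> Prop) : Prop :=
  I (sb_e A) /\
  (forall x y, I x -> I y -> I (sb_add x y)) /\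
  (forall x, I x -> I (sb_opp x)) /\
  (forall a x, I x -> I (sb_add (sb_add a x) (sb_opp a))) /\
  (forall x y, I x -> I y -> I (sb_circ x y)) /\
  (forall x, I x -> I (sb_cinv x)) /\
  (forall a x, I x -> I (sb_circ (sb_circ a x) (sb_cinv a))) /\
  (forall a x, I x -> I (sb_lambda a x)).

Definition is_prime_ideal (P : A -> Prop) : Prop :=
  is_ideal P /\ (exists a, ~ P a) /\
  forall X Y : A -> Prop,
    (forall x y, X x -> Y y -> P (sb_star x y)) -> subset X P \/ subset Y P.

Definition is_minimal_prime (P : A -> Prop) : Prop :=
  is_prime_ideal P /\
  forall Q, is_prime_ideal Q -> subset Q P -> subset P Q.

(* Subsets of Spec A are predicates on prime ideals (predicates on A). *)
Definition H (I : A -> Prop) : (A -> Prop) -> Prop :=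
  fun P => is_prime_ideal P /\ subset I P.

Definition spec_subset (C D : (A -> Prop) -> Prop) : Prop :=
  forall P, C P -> D P.

Definition spec_closed (C : (A -> Prop) -> Prop) : Prop :=
  exists I, is_ideal I /\ forall P, C P <-> H I P.

Definition strictly_smaller (C1 C : (A -> Prop) -> Prop) : Prop :=
  spec_subset C1 C /\ ~ spec_subset C C1.

Definition spec_irreducible (C : (A -> Prop) -> Prop) : Prop :=
  spec_closed C /\ (exists P, C P) /\
  ~ (exists C1 C2, spec_closed C1 /\ spec_closed C2 /\
        strictly_smaller C1 C /\ strictly_smaller C2 C /\
        forall P, C P <-> (C1 P \/ C2 P)).

Definition irreducible_component (C : (A -> Prop) -> Prop) : Prop :=
  spec_irreducible C /\
  forall D, spec_irreducible D -> spec_subset C D -> spec_subset D C.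

End SB.

(* Main.v *)
Require Import Defs.
From Stdlib Require Import Classical.

Definition gen (A : SkewBrace) (S : A -> Prop) : A -> Prop :=
  fun x => forall K, is_ideal A K -> subset A S K -> K x.

Lemma gen_ideal (A : SkewBrace) (S : A -> Prop) : is_ideal A (gen A S).
Proof.
  unfold gen.
  repeat split; intros;
  match goal with HK : is_ideal A ?K |- _ =>
    pose proof HK as (h1&h2&h3&h4&h5&h6&h7&h8) end;
  repeat match goal with h : forall K0, is_ideal A K0 -> subset A S K0 -> K0 ?x |- _ =>
    specialize (h _ ltac:(eassumption) ltac:(eassumption)) end; eauto.
Qed.

Lemma gen_sub (A : SkewBrace) (S : A -> Prop) : subset A S (gen A S).
Proof. intros x Hx K _ HS. auto. Qed.

Lemma gen_min (A : SkewBrace) (S K : A -> Prop) :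
  is_ideal A K -> subset A S K -> subset A (gen A S) K.
Proof. intros HK HS x Hx. apply Hx; auto. Qed.

Definition inter (A : SkewBrace) (D : (A -> Prop) -> Prop) : A -> Prop :=
  fun x => forall Q, D Q -> Q x.

Lemma H_prime_irred (A : SkewBrace) (P : A -> Prop) :
  is_prime_ideal A P -> spec_irreducible A (H A P).
Proof.
  intros HP. split; [|split].
  - exists P. split; [apply HP | tauto].
  - exists P. split; [exact HP | intros x hx; exact hx].
  - unfold spec_closed, strictly_smaller. intros (C1 & C2 & [I1 [HI1 E1]] & [I2 [HI2 E2]] & [_ S1] & [_ S2] & U).
    assert (HPP : H A P P) by (split; [exact HP | intros x hx; exact hx]).
    destruct (proj1 (U P) HPP) as [c|c].
    + apply S1. intros Q [HQ PQ]. apply E1. apply E1 in c. destruct c as [_ c].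
      split; auto. intros x hx; apply PQ, c, hx.
    + apply S2. intros Q [HQ PQ]. apply E2. apply E2 in c. destruct c as [_ c].
      split; auto. intros x hx; apply PQ, c, hx.
Qed.

Lemma irred_H (A : SkewBrace) (D : (A -> Prop) -> Prop) :
  spec_irreducible A D ->
  is_prime_ideal A (inter A D) /\ forall Q, D Q <-> H A (inter A D) Q.
Proof.
  intros ([I [HI E]] & [Q0 HQ0] & NU).
  assert (DP : forall Q, D Q -> is_prime_ideal A Q /\ subset A I Q)
    by (intros Q hQ; apply E; auto).
  assert (Iint : subset A I (inter A D)) by (intros x hx Q hQ; apply (DP Q hQ); auto).
  assert (Hid : is_ideal A (inter A D)).
  { unfold inter. repeat split; intros;
    match goal with hQ : D ?Q |- _ =>
      destruct (DP Q hQ) as [[(h1&h2&h3&h4&h5&h6&h7&h8) _] _] end;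
    repeat match goal with h : forall Q0, D Q0 -> Q0 ?x, hQ : D ?Q |- _ =>
      specialize (h Q hQ) end; eauto. }
  assert (Hpr : is_prime_ideal A (inter A D)).
  { split; [exact Hid|split].
    - destruct (DP Q0 HQ0) as [[_ [[a na] _]] _]. exists a. intro h. apply na, h, HQ0.
    - intros X Y XY.
      destruct (classic (subset A X (inter A D))) as [hX|hX]; [left; exact hX|].
      destruct (classic (subset A Y (inter A D))) as [hY|hY]; [right; exact hY|].
      exfalso. apply NU.
      exists (H A (gen A (fun x => I x \/ X x))), (H A (gen A (fun x => I x \/ Y x))).
      assert (key : forall Z : A -> Prop, forall Q,
        H A (gen A (fun x => I x \/ Z x)) Q <-> D Q /\ subset A Z Q).
      { intros Z Q. split.
        - intros [hQ hg].
          assert (sI : subset A I Q) by (intros x hx; apply hg, gen_sub; auto).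
          split; [apply E; split; auto|].
          intros x hx; apply hg, gen_sub; auto.
        - intros [hQ hZ]. destruct (DP Q hQ) as [pQ sI]. split; [exact pQ|].
          apply gen_min; [apply pQ|]. intros x [hx|hx]; auto. }
      repeat split.
      + exists (gen A (fun x => I x \/ X x)). split; [apply gen_ideal|tauto].
      + exists (gen A (fun x => I x \/ Y x)). split; [apply gen_ideal|tauto].
      + intros Q hQ. apply key in hQ. tauto.
      + intros hs. apply hX. intros x hx Q hQ. apply hs in hQ. apply key in hQ.
        apply hQ, hx.
      + intros Q hQ. apply key in hQ. tauto.
      + intros hs. apply hY. intros x hx Q hQ. apply hs in hQ. apply key in hQ.
        apply hQ, hx.
      + intros hQ. destruct (DP P hQ) as [pQ _].
        destruct pQ as [_ [_ pr]].
        destruct (pr X Y) as [h|h].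
        * intros x y hx hy. apply (XY x y hx hy P hQ).
        * left. apply key. auto.
        * right. apply key. auto.
      + intros [h|h]; apply key in h; tauto. }
  split; [exact Hpr|].
  intros Q. split.
  - intros hQ. split; [apply (DP Q hQ)|]. intros x hx. apply hx, hQ.
  - intros [pQ sQ]. apply E. split; [exact pQ|]. intros x hx. apply sQ, Iint, hx.
Qed.

Theorem lemma4p12 (A : SkewBrace) (C : (A -> Prop) -> Prop) :
  irreducible_component A C <->
  exists P : A -> Prop, is_minimal_prime A P /\ (forall Q, C Q <-> H A P Q).
Proof.
  split.
  - intros [Hirr Hmax]. destruct (irred_H _ _ Hirr) as [Hpr E].
    exists (inter A C). split; [split; [exact Hpr|]|exact E].
    intros Q pQ sQ.
    assert (hQ : spec_irreducible A (H A Q)) by (apply H_prime_irred; auto).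
    assert (sub : spec_subset A C (H A Q)).
    { intros R hR. apply E in hR. destruct hR as [pR sR]. split; auto.
      intros x hx; apply sR, sQ, hx. }
    assert (hQQ : H A Q Q) by (split; [exact pQ | intros x hx; exact hx]).
    pose proof (Hmax _ hQ sub Q hQQ) as cQ.
    apply E in cQ. apply cQ.
  - intros [P [[pP minP] E]].
    assert (Hirr : spec_irreducible A C).
    { destruct (H_prime_irred _ _ pP) as ([I [HI EI]] & [P0 h0] & NU).
      split; [|split].
      + exists I. split; auto. intros Q. rewrite E. apply EI.
      + exists P0. apply E, h0.
      + intros (C1 & C2 & c1 & c2 & [a1 b1] & [a2 b2] & U). apply NU.
        exists C1, C2. split; [exact c1|]. split; [exact c2|].
        split; [split|split; [split|]].
        * intros Q q; apply E, a1, q.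
        * intros hs; apply b1; intros Q q; apply hs, E, q.
        * intros Q q; apply E, a2, q.
        * intros hs; apply b2; intros Q q; apply hs, E, q.
        * intros Q; split; [intros q; apply U, E, q | intros q; apply E, U, q]. }
    split; [exact Hirr|].
    intros D hD sub.
    destruct (irred_H _ _ hD) as [Hpr ED].
    assert (hP : C P) by (apply E; split; [exact pP | intros x hx; exact hx]).
    assert (s1 : subset A (inter A D) P) by (intros x hx; apply hx, sub, hP).
    pose proof (minP _ Hpr s1) as s2.
    intros Q hQ. apply ED in hQ. destruct hQ as [pQ sQ]. apply E.
    split; auto. intros x hx; apply sQ, s2, hx.
Qed.
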